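(* Let $f:X\to Y$ be a morphism of presheaves on $\mathscr{V}_f$ such that $X=X_{\le n}$ for some $n\in\mathbb{N}$. Then $f$ is a monomorphism if and only if $f:X(\mathbb{F}^n)\to Y(\mathbb{F}^n)$ is injective.
   Context: $p$ prime, $\mathbb{F}=\mathbb{F}_p$, $\mathscr{V}_f$ finite-dimensional $\mathbb{F}$-vector spaces; presheaves are contravariant functors $\mathscr{V}_f\to$ Sets. For a presheaf $X$, $X_{\le n}\subset X$ is the image of the evaluation map $X(\mathbb{F}^n)\times_{\mathrm{End}(\mathbb{F}^n)}\mathrm{Hom}(-,\mathbb{F}^n)\to X$ (the $n$-th stage of the rank filtration). *)

(* Defs.v *)
From mathcomp Require Import all_boot all_order all_algebra.
Set Implicit Arguments. Unset Strict Implicit. Unset Printing Implicit Defensive.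
Import GRing.Theory.
Local Open Scope ring_scope.

(* The category V_f of finite-dimensional F_p-vector spaces is replaced by its
   (equivalent) skeleton: objects are n : nat (standing for F_p^n), and a
   morphism F^m -> F^n is a matrix A : 'M['F_p]_(m, n), acting on row vectors
   (v |-> v *m A); composition of A : m -> n then B : n -> k is A *m B. *)

Record presheaf (p : nat) := Presheaf {
  pobj :> nat -> Type;
  pact : forall m n : nat, 'M['F_p]_(m, n) -> pobj n -> pobj m;
  pact_id : forall n (x : pobj n), pact 1%:M x = x;
  pact_comp : forall m n k (A : 'M['F_p]_(m, n)) (B : 'M['F_p]_(n, k)) (x : pobj k),
      pact (A *m B) x = pact A (pact B x)
}.

Record presheaf_mor (p : nat) (X Y : presheaf p) := PresheafMor {
  pmap :> forall n : nat, X n -> Y n;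
  pmap_nat : forall m n (A : 'M['F_p]_(m, n)) (x : X n),
      pmap (pact A x) = pact A (pmap x)
}.

Definition presheaf_mono (p : nat) (X Y : presheaf p) (f : presheaf_mor X Y) : Prop :=
  forall (Z : presheaf p) (g h : presheaf_mor Z X),
    (forall n (z : Z n), f n (g n z) = f n (h n z)) ->
    forall n (z : Z n), g n z = h n z.

(* y in X_{<= n}(F^m): y is in the image of the evaluation map
   X(F^n) x Hom(F^m, F^n) -> X(F^m). *)
Definition in_rank_le (p : nat) (X : presheaf p) (n m : nat) (y : X m) : Prop :=
  exists (A : 'M['F_p]_(m, n)) (x : X n), y = pact A x.

Definition rank_filtration_full (p : nat) (X : presheaf p) (n : nat) : Prop :=
  forall m (y : X m), @in_rank_le p X n m y.

(* Main.v *)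
Require Import Defs.
From mathcomp Require Import all_boot all_order all_algebra.
From mathcomp Require Import zify.
Set Implicit Arguments. Unset Strict Implicit. Unset Printing Implicit Defensive.
Import GRing.Theory.
Local Open Scope ring_scope.

Lemma factor_rank (F : fieldType) m n (E : 'M[F]_m) : (\rank E <= n)%N ->
  exists (D : 'M[F]_(m,n)) (C : 'M[F]_(n,m)), E = D *m C.
Proof.
move=> hr.
exists (col_ebase E *m pid_mx (\rank E)), (pid_mx (\rank E) *m row_ebase E).
rewrite -{1}(mulmx_ebase E) !mulmxA -[_ *m pid_mx _ *m pid_mx _]mulmxA mul_pid_mx.
by rewrite minnn (minn_idPr hr).
Qed.
Lemma exists_E0 (F : fieldType) m n (A B : 'M[F]_(m,n)) :
  exists E : 'M[F]_m, (\rank E <= n)%N /\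
    E *m A = A /\ kermx B *m E *m B = 0.
Proof.
set K := kermx A; set K' := kermx B.
set M := (K' :\: K)%MS.
set W := ((K + M)^C)%MS.
set U := (M + W)%MS.
have MK : (M :&: K = 0)%MS by exact: capmx_diff.
have rKM : \rank (K + M)%MS = (\rank K + \rank M)%N.
  by have := mxrank_sum_cap K M; rewrite capmxC MK mxrank0 addn0.
have rW : \rank W = (m - \rank (K + M)%MS)%N by rewrite mxrank_compl.
have rKMle : (\rank (K + M)%MS <= m)%N by exact: rank_leq_col.
have rU : (\rank U <= \rank M + \rank W)%N by exact: mxrank_adds_leqif.
have full : (1%:M <= U + K)%MS.
  have := addsmx_compl_full (K + M)%MS; rewrite -/W -sub1mx => h.
  apply: submx_trans h _.
  rewrite addsmx_sub; apply/andP; split; last by apply: submx_trans (addsmxSl U K); exact: addsmxSr.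
  rewrite addsmx_sub; apply/andP; split; first exact: addsmxSr.
  by apply: submx_trans (addsmxSl U K); exact: addsmxSl.
have rUK : \rank (U + K)%MS = m.
  apply/eqP; rewrite eqn_leq rank_leq_col /=.
  by have := mxrankS full; rewrite mxrank1.
have UK : (U :&: K = 0)%MS.
  apply/eqP; rewrite -mxrank_eq0.
  have := mxrank_sum_cap U K; rewrite rUK.
  have := mxrank_ker A; rewrite -/K => rK.
  have := rank_leq_col A.
  move=> *; apply/eqP; lia.
set E := proj_mx U K.
exists E; split; [|split].
- have := mxrankS (proj_mx_sub U K (1%:M : 'M_m)); rewrite mul1mx -/E => hE.
  apply: leq_trans hE _.
  have := mxrank_sum_cap U K; rewrite rUK UK mxrank0.
  have := mxrank_ker A; rewrite -/K => rK.
  have := rank_leq_col A.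
  move=> *; lia.
- have h := proj_mx_compl_sub (W := 1%:M) full.
  rewrite mul1mx in h.
  have /sub_kermxP h2 := h.
  by move: h2; rewrite mulmxBl mul1mx => /eqP; rewrite subr_eq0 => /eqP.
- apply/sub_kermxP.
  have hK' : (K' <= M + K' :&: K)%MS by rewrite addsmx_diff_cap_eq.
  apply: submx_trans (submxMr E hK') _.
  rewrite addsmxMr; rewrite addsmx_sub; apply/andP; split.
    rewrite proj_mx_id //; first exact: diffmxSl.
    by apply: addsmxSl.
  rewrite proj_mx_0 //; first exact: sub0mx.
  exact: capmxSr.
Qed.

Section Main.
Variable p : nat.

Lemma key (X : presheaf p) n (hX : rank_filtration_full X n) m (y1 y2 : X m) :
  (forall C : 'M['F_p]_(n, m), pact C y1 = pact C y2) -> y1 = y2.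
Proof.
move=> hC.
have [A [x1 Hy1]] := hX m y1; subst y1.
have [B [x2 Hy2]] := hX m y2; subst y2.
have [E [hr [hEA hEB]]] := exists_E0 A B.
have [D [C hDC]] := factor_rank hr.
set z1 := pact A x1; set z2 := pact B x2.
have e1 : z1 = pact (E *m B) x2.
  rewrite /z1 -{1}hEA pact_comp hDC pact_comp -/z1 hC -pact_comp -hDC.
  by rewrite pact_comp.
set E' := B *m pinvmx B.
have hE'B : E' *m B = B by rewrite /E' mulmxKpV.
have hE'EB : E' *m (E *m B) = E *m B.
  have : ((E' - 1%:M) <= kermx B)%MS.
    by apply/sub_kermxP; rewrite mulmxBl mul1mx hE'B subrr.
  case/submxP => Z hZ.
  apply/eqP; rewrite -subr_eq0 -[X in _ - X]mul1mx -mulmxBl hZ.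
  by rewrite mulmxA -(mulmxA Z) -(mulmxA Z) hEB mulmx0.
have e2 : z2 = pact E' z1.
  by rewrite /E' pact_comp hC -pact_comp /z2 -pact_comp -/E' hE'B.
by rewrite e2 e1 -pact_comp hE'EB.
Qed.
End Main.

Definition yoneda (p n : nat) : presheaf p.
refine (@Presheaf p (fun m => 'M['F_p]_(m, n)) (fun m k A B => A *m B) _ _).
- by move=> k x; rewrite mul1mx.
- by move=> a b c A B x; rewrite mulmxA.
Defined.

Definition yon_mor (p n : nat) (X : presheaf p) (x : X n) :
  presheaf_mor (yoneda p n) X.
refine (@PresheafMor p (yoneda p n) X (fun k (B : 'M['F_p]_(k, n)) => pact B x) _).
by move=> m k A B /=; rewrite pact_comp.
Defined.

Lemma yon_morE (p n : nat) (X : presheaf p) (x : X n) k (B : 'M['F_p]_(k, n)) :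
  yon_mor x k B = pact B x.
Proof. by []. Qed.

Theorem corollary5p6 (p : nat) (p_prime : prime p) (X Y : presheaf p)
    (f : presheaf_mor X Y) (n : nat) :
  @rank_filtration_full p X n ->
  (@presheaf_mono p X Y f <-> injective (f n)).
Proof.
move=> hX; split.
- move=> hm x1 x2 hx.
  have := hm _ (yon_mor x1) (yon_mor x2) _ n (1%:M : 'M_n).
  rewrite !yon_morE !pact_id; apply.
  by move=> k z; rewrite !yon_morE !pmap_nat hx.
- move=> hi Z g h hfg m z.
  apply: (key hX) => C.
  by apply: hi; rewrite !pmap_nat hfg.
Qed.
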